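(* Let $G$ be a Polish group and let $\varphi,\psi\colon G \to [0,\infty]$ be arbitrary functions. Then for every $g \in G$, \[ (\varphi \diamond \psi)(g) \leq (U(\varphi) \diamond U(\psi))(g). \]
   Context: For functions $\varphi,\psi\colon G \to [0,\infty]$, define $(\varphi \diamond \psi)(x) = \inf_{h \in G} \bigl(\varphi(h) + \psi(h^{-1}x)\bigr)$. For $\varphi\colon G\to[0,\infty]$, $U(\varphi)$ denotes the pointwise infimum of all upper semi-continuous functions $\psi\colon G \to [0,\infty]$ such that the set $\{x \colon \varphi(x) > \psi(x)\}$ is meagre in $G$. *)

(* Defs.v *)
From HB Require Import structures.
From mathcomp Require Import all_boot all_order all_algebra.
From mathcomp Require Import monoid.
From mathcomp Require Import all_classical all_reals topology ereal.
Import Order.TTheory GRing.Theory Num.Theory.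

Set Implicit Arguments.
Unset Strict Implicit.
Unset Printing Implicit Defensive.

Local Open Scope classical_set_scope.
Local Open Scope ring_scope.

(* A group carrying a topology (the topological-group axioms are stated in
   [topological_group] below). *)
HB.structure Definition TopGroupT := {G of Group G & Topological G}.
Notation topGroupType := TopGroupT.type.

Definition topological_group (G : topGroupType) : Prop :=
  continuous (fun p : G * G => (p.1 * p.2)%g) /\
  continuous (fun x : G => (x^-1)%g).

Definition separable_space (T : topologicalType) : Prop :=
  exists D : set T, countable D /\ dense D.

Definition completely_metrizable (R : realType) (T : topologicalType) : Prop :=
  exists d : T -> T -> R,
    [/\ (forall x y, 0 <= d x y) /\ (forall x y, d x y = 0 <-> x = y),
        (forall x y, d x y = d y x),
        (forall x y z, d x z <= d x y + d y z),
        (forall (x : T) (A : set T),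
            nbhs x A <-> exists2 e : R, 0 < e & [set y | d x y < e] `<=` A) &
        (forall u : nat -> T,
            (forall e : R, 0 < e -> exists N : nat, forall m n : nat,
                 (N <= m)%N -> (N <= n)%N -> d (u m) (u n) < e) ->
            exists l : T, u @ \oo --> l)].

Definition polish_space (R : realType) (T : topologicalType) : Prop :=
  separable_space T /\ completely_metrizable R T.

Definition polish_group (R : realType) (G : topGroupType) : Prop :=
  topological_group G /\ polish_space R G.

Definition nowhere_dense (T : topologicalType) (A : set T) : Prop :=
  (closure A)° = set0.

Definition meagre (T : topologicalType) (A : set T) : Prop :=
  exists F : nat -> set T,
    (forall n, nowhere_dense (F n)) /\ A `<=` \bigcup_n F n.

Local Open Scope ereal_scope.

Definition upper_semicontinuous (R : realType) (T : topologicalType)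
    (f : T -> \bar R) : Prop :=
  forall a : R, open [set x | f x < a%:E].

Definition diamond (R : realType) (G : topGroupType) (phi psi : G -> \bar R)
    (x : G) : \bar R :=
  ereal_inf [set phi h + psi (h^-1 * x)%g | h in [set: G]].

Definition Uenv (R : realType) (G : topGroupType) (phi : G -> \bar R)
    (x : G) : \bar R :=
  ereal_inf [set psi x | psi in
    [set psi : G -> \bar R |
       (forall y, 0 <= psi y) /\ upper_semicontinuous psi /\
       meagre [set y | psi y < phi y]]].

(* Main.v *)
Require Import Defs.
From HB Require Import structures.
From mathcomp Require Import all_boot all_order all_algebra.
From mathcomp Require Import monoid.
From mathcomp Require Import all_classical all_reals topology ereal.
From mathcomp Require Import lra.
Import Order.TTheory GRing.Theory Num.Theory.

Module Aux.
Local Open Scope classical_set_scope.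
Local Open Scope ring_scope.

Section Metric.
Variables (R : realType) (T : topologicalType) (d : T -> T -> R).
Hypothesis d0 : forall x y, 0 <= d x y.
Hypothesis dxx : forall x y, d x y = 0 <-> x = y.
Hypothesis dsym : forall x y, d x y = d y x.
Hypothesis dtri : forall x y z, d x z <= d x y + d y z.
Hypothesis dnb : forall (x : T) (A : set T),
            nbhs x A <-> exists2 e : R, 0 < e & [set y | d x y < e] `<=` A.

Let ball x r := [set y | d x y < r].

Lemma ball_open x r : open (ball x r).
Proof.
rewrite openE => y /= Hy; rewrite /interior; apply/dnb.
exists (r - d x y); first by rewrite subr_gt0.
move=> z /= Hz; have := dtri x y z; rewrite /ball /= in Hy *; lra.
Qed.

Lemma ball_center x r : 0 < r -> ball x r x.
Proof. by move=> r0; rewrite /ball /= (proj2 (dxx x x) erefl). Qed.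


Lemma step (F : set T) (HF : nowhere_dense F) x r (n : nat) : 0 < r ->
  exists y r', [/\ 0 < r', r' <= n.+1%:R^-1 &
     ball y (2 * r') `<=` ball x r `&` ~` closure F].
Proof.
move=> r0.
have nsub : ~ (ball x r `<=` closure F).
  move=> sub.
  have : (closure F)° x.
    have := ball_open x r; rewrite openE => /(_ x (@ball_center x r r0)).
    rewrite /interior => nb; exact: filterS nb.
  by rewrite HF.
have [y [Hy Hny]] : exists y, ball x r y /\ ~ closure F y.
  apply: contrapT => H; apply: nsub => y Hy; apply: contrapT => Hn; apply: H.
  by exists y.
have Ho : open (ball x r `&` ~` closure F).
  apply: openI; first exact: ball_open.
  apply: closed_openC; exact: closed_closure.
move: Ho; rewrite openE => /(_ y (conj Hy Hny)); rewrite /interior.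
move=> /dnb [e e0 sub].
exists y, (Num.min (e / 2) n.+1%:R^-1); split.
- by rewrite lt_min; apply/andP; split; [rewrite divr_gt0|rewrite invr_gt0].
- by rewrite ge_min lexx orbT.
- move=> z Hz; apply: sub; rewrite /= /ball /= in Hz *.
  have : Num.min (e / 2) n.+1%:R^-1 <= e / 2 by rewrite ge_min lexx.
  lra.
Qed.


Hypothesis dcomp : forall u : nat -> T,
            (forall e : R, 0 < e -> exists N : nat, forall m n : nat,
                 (N <= m)%N -> (N <= n)%N -> d (u m) (u n) < e) ->
            exists l : T, u @ \oo --> l.

Theorem baire (F : nat -> set T) (HF : forall n, nowhere_dense (F n))
  (W : set T) (x0 : T) : open W -> W x0 -> exists y, W y /\ forall n, ~ F n y.
Proof.
move=> oW Wx0.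
have [r0 r0pos sub0] : exists2 r0, 0 < r0 & ball x0 r0 `<=` W.
  by apply/dnb; move: oW; rewrite openE => /(_ x0 Wx0).
have H : forall np : nat * (T * R), exists q : T * R, 0 < np.2.2 ->
   [/\ 0 < q.2, q.2 <= np.1.+1%:R^-1 &
     ball q.1 (2 * q.2) `<=` ball np.2.1 np.2.2 `&` ~` closure (F np.1)].
  case=> n [x r]; case: (pselect (0 < r)) => [rp|rn].
    by have [y [r' [? ? ?]]] := @step _ (HF n) x r n rp; exists (y, r').
  by exists (x, r) => /= rp; exfalso; exact: rn.
have [f Hf] := choice H.
pose s : nat -> T * R := fix s n := match n with 0 => (x0, r0) | m.+1 => f (m, s m) end.
have pos : forall n, 0 < (s n).2.
  by elim=> [|n IH] //=; have [] := Hf (n, s n) IH.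
have P : forall n, [/\ 0 < (s n.+1).2, (s n.+1).2 <= n.+1%:R^-1 &
     ball (s n.+1).1 (2 * (s n.+1).2) `<=` ball (s n).1 (s n).2 `&` ~` closure (F n)].
  by move=> n; exact: (Hf (n, s n) (pos n)).
have nest1 : forall n, ball (s n.+1).1 (s n.+1).2 `<=` ball (s n).1 (s n).2.
  move=> n z Hz; have [p1 _ p3] := P n; apply: (proj1 (p3 z _)).
  rewrite /ball /= in Hz *; lra.
have nest : forall n m, (n <= m)%N -> ball (s m).1 (s m).2 `<=` ball (s n).1 (s n).2.
  move=> n; elim=> [|m IH] Hnm.
    by rewrite leqn0 in Hnm; move/eqP: Hnm => ->.
  rewrite leq_eqVlt in Hnm; case/orP: Hnm => [/eqP->//|Hlt].
  move=> z Hz; apply: IH; first by rewrite -ltnS.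
  exact: nest1.
have dist : forall n m, (n <= m)%N -> d (s n).1 (s m).1 < (s n).2.
  by move=> n m Hnm; apply: (nest n m Hnm); apply: ball_center.
have cauchy : forall e : R, 0 < e -> exists N : nat, forall m n : nat,
                 (N <= m)%N -> (N <= n)%N -> d ((s m).1) ((s n).1) < e.
  move=> e e0.
  have e2 : 0 < e / 2 by rewrite divr_gt0.
  have [K HK] := ltr_add_invr e2.
  exists K.+1 => m k Hm Hk.
  have h1 := dist _ _ Hm; have h2 := dist _ _ Hk.
  have [_ h3 _] := P K.
  have := dtri (s m).1 (s K.+1).1 (s k).1; rewrite (dsym (s m).1 (s K.+1).1).
  have h3' : (s K.+1).2 <= (K.+1%:R^-1 : R) := h3.
  move: HK h3'; generalize (K.+1%:R^-1 : R) => c HK h3'.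
  lra.
have [l Hl] := @dcomp (fun n => (s n).1) cauchy.
have bnd : forall n, d (s n).1 l <= (s n).2.
  move=> n; apply/ler_addgt0Pr => e e0.
  have nb : nbhs l (ball l e) by apply/dnb; exists e.
  have [N _ HN] := Hl _ nb.
  have h1 := dist n (maxn n N) (leq_maxl _ _).
  have h2 : d l (s (maxn n N)).1 < e := HN _ (leq_maxr _ _).
  have h4 := dtri (s n).1 (s (maxn n N)).1 l; rewrite (dsym (s (maxn n N)).1 l) in h4; lra.
have Q : forall n, (ball (s n).1 (s n).2 `&` ~` closure (F n)) l.
  move=> n; have [p1 _ p3] := P n; apply: p3; rewrite /ball /=.
  have := bnd n.+1; lra.
exists l; split; first by apply: sub0; exact: (Q 0%N).1.
by move=> n Fl; apply: (Q n).2; apply: subset_closure.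
Qed.

End Metric.

Lemma cl_pre (T : topologicalType) (f : T -> T) (N : set T) :
  continuous f -> closure (f @^-1` N) `<=` f @^-1` closure N.
Proof.
move=> cf w Hw B nbB.
have := Hw (f @^-1` B) (cf w B nbB).
case=> v [Nv Bv]; by exists (f v).
Qed.

Lemma nd_pre (T : topologicalType) (f g : T -> T) (N : set T) :
  continuous f -> continuous g -> (forall x, g (f x) = x) ->
  (forall y, f (g y) = y) -> nowhere_dense N -> nowhere_dense (f @^-1` N).
Proof.
move=> cf cg gf fg HN; rewrite /nowhere_dense.
apply/seteqP; split => [z Hz|]; last by [].
suff : (closure N)° (f z) by rewrite HN.
move: Hz; rewrite /interior => Hz.
have h1 : nbhs z (f @^-1` closure N).
  apply: (filterS _ Hz); exact: cl_pre.
have h2 : nbhs (g (f z)) (f @^-1` closure N) by rewrite gf.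
have h3 := cg (f z) _ h2.
rewrite /interior.
apply: (@filterS _ _ _ (g @^-1` (f @^-1` closure N))); last exact: h3.
by move=> y /=; rewrite fg.
Qed.

Local Open Scope ereal_scope.

Lemma le_adde_eps (R : realType) (D x y : \bar R) : 0 <= x -> 0 <= y ->
  (forall e : R, (0 < e)%R -> x \is a fin_num -> y \is a fin_num ->
     D <= x + y + e%:E) -> D <= x + y.
Proof.
case: x => [x| |] //; case: y => [y| |] // x0 y0 H; try by rewrite ?addye ?addey ?leey.
by apply/lee_addgt0Pr => e e0; apply: H.
Qed.

Lemma le_inf_sum (R : realType) (D : \bar R) (A B : set (\bar R)) :
  (forall a, A a -> 0 <= a) -> (forall b, B b -> 0 <= b) ->
  (forall a b, A a -> B b -> D <= a + b) ->
  D <= ereal_inf A + ereal_inf B.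
Proof.
move=> A0 B0 H.
have iA : 0 <= ereal_inf A by apply/ereal_infP.
have iB : 0 <= ereal_inf B by apply/ereal_infP.
apply: le_adde_eps => // e e0 fA fB.
have e2 : (0 < e / 2)%R by rewrite divr_gt0.
have [a Aa lta] := lb_ereal_inf_adherent e2 fA.
have [b Bb ltb] := lb_ereal_inf_adherent e2 fB.
apply: (le_trans (H a b Aa Bb)).
apply: (le_trans (leeD (ltW lta) (ltW ltb))).
rewrite -(fineK fA) -(fineK fB) -!EFinD lee_fin; lra.
Qed.

End Aux.
Import Aux.

Local Open Scope ereal_scope.

Local Open Scope classical_set_scope.
Local Open Scope ereal_scope.

Theorem proposition3p4 (R : realType) (G : topGroupType)
  (HG : polish_group R G) (phi psi : G -> \bar R)
  (Hphi : forall x, 0 <= phi x) (Hpsi : forall x, 0 <= psi x) (g : G) :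
  diamond phi psi g <= diamond (Uenv phi) (Uenv psi) g.
Proof.
have [[cmul cinv] [_ [d [[d0 dxx] dsym dtri dnb dcomp]]]] := HG.
pose fm := fun x : G => (x^-1 * g)%g.
pose gi := fun y : G => (g * y^-1)%g.
have cfm : continuous fm.
  move=> x.
  have cp : {for x, continuous (fun x : G => ((x^-1)%g, g))}.
    by apply: cvg_pair; [exact: cinv | exact: cvg_cst].
  exact: (continuous_comp cp (cmul ((x^-1)%g, g))).
have cgi : continuous gi.
  move=> x.
  have cp : {for x, continuous (fun x : G => (g, (x^-1)%g))}.
    by apply: cvg_pair; [exact: cvg_cst | exact: cinv].
  exact: (continuous_comp cp (cmul (g, (x^-1)%g))).
have gf : forall x, gi (fm x) = x.
  by move=> x; rewrite /gi /fm invgM invgK mulgA mulgV mul1g.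
have fg : forall y, fm (gi y) = y.
  by move=> y; rewrite /gi /fm invgM invgK -mulgA mulVg mulg1.
apply/ereal_infP => _ [h _ <-].
set k := (h^-1 * g)%g.
apply: le_inf_sum.
- by move=> _ [p [p0 _] <-].
- by move=> _ [p [p0 _] <-].
move=> _ _ [p1 [p10 [u1 m1]] <-] [p2 [p20 [u2 m2]] <-].
apply: le_adde_eps => // e e0 f1 f2.
set a := fine (p1 h); set b := fine (p2 k).
have e2 : (0 < e / 2)%R by rewrite divr_gt0.
pose U1 := [set x : G | p1 x < (a + e / 2)%:E]%classic.
pose V1 := [set x : G | p2 x < (b + e / 2)%:E]%classic.
have oW : open (U1 `&` fm @^-1` V1).
  apply: openI; first exact: u1.
  by apply: open_comp; [move=> x _; exact: cfm | exact: u2].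
have Wh : (U1 `&` fm @^-1` V1) h.
  split; rewrite /U1 /V1 /=.
    by rewrite -(fineK f1) lte_fin /a; lra.
  by rewrite -/k -(fineK f2) lte_fin /b; lra.
have [F1 [nd1 sub1]] := m1.
have [F2 [nd2 sub2]] := m2.
pose F := fun n => if odd n then F1 n./2 else fm @^-1` F2 n./2.
have ndF : forall n, nowhere_dense (F n).
  move=> n; rewrite /F; case: (odd n); first exact: nd1.
  exact: (@nd_pre _ fm gi _ cfm cgi gf fg (nd2 _)).
have [y [[Uy Vy] nF]] := @baire _ _ d dxx dsym dtri dnb dcomp F ndF _ h oW Wh.
have le1 : phi y <= p1 y.
  rewrite leNgt; apply/negP => lt; have [n _ Fn] := sub1 y lt.
  apply: (nF n.*2.+1); rewrite /F /= odd_double /=.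
  by rewrite uphalf_double.
have le2 : psi (fm y) <= p2 (fm y).
  rewrite leNgt; apply/negP => lt; have [n _ Fn] := sub2 _ lt.
  apply: (nF n.*2); rewrite /F /= odd_double /= doubleK.
  exact: Fn.
have hD : diamond phi psi g <= phi y + psi (fm y).
  by apply: ereal_inf_lbound; exists y.
apply: (le_trans hD).
apply: (le_trans (leeD (le_trans le1 (ltW Uy)) (le_trans le2 (ltW Vy)))).
rewrite -(fineK f1) -(fineK f2) -!EFinD lee_fin /a /b; lra.
Qed.
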